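(* Let $\mathcal{A}\subset\mathbb{C}^n$ be a centrosymmetric set of atoms whose convex hull is compact and contains a ball of positive radius around the origin. Let $x^\star\in\mathbb{C}^n$, let $w$ be a random vector in $\mathbb{C}^n$ with $\mathbb{E}\|w\|_{\mathcal{A}}^*<\infty$, and suppose there is a function $\delta$ such that $P(\|w\|_{\mathcal{A}}^*\ge\mathbb{E}\|w\|_{\mathcal{A}}^*+t)<\delta(t)$ for all $t>0$. Let $\tau>0$, $y=x^\star+w$, and let $\hat{x}$ be the solution of $$\operatorname*{minimize}_{x\in\mathbb{C}^n}\ \tfrac{1}{2}\|x-y\|_2^2+\tau\|x\|_{\mathcal{A}}.$$ For $\gamma\in[0,1]$ define the cone $$C_\gamma(x^\star,\mathcal{A})=\operatorname{cone}\left(\{z:\|x^\star+z\|_{\mathcal{A}}\le\|x^\star\|_{\mathcal{A}}+\gamma\|z\|_{\mathcal{A}}\}\right)$$ and $$\phi_\gamma(x^\star,\mathcal{A})=\inf\left\{\frac{\|z\|_2}{\|z\|_{\mathcal{A}}}: z\in C_\gamma(x^\star,\mathcal{A})\right\}.$$ Suppose $\phi_\gamma(x^\star,\mathcal{A})>0$ for some $\gamma\in[0,1]$ with $\gamma>\mathbb{E}\|w\|_{\mathcal{A}}^*/\tau$. Then $$\|\hat{x}-x^\star\|_2^2\le\frac{(1+\gamma)^2\tau^2}{\gamma^2\,\phi_\gamma(x^\star,\mathcal{A})^2}$$ with probability at least $1-\delta(\gamma\tau-\mathbb{E}\|w\|_{\mathcal{A}}^* )$.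
   Context: The atomic norm is the gauge $\|x\|_{\mathcal{A}}=\inf\{t>0: x\in t\,\operatorname{conv}(\mathcal{A})\}$. The real inner product on $\mathbb{C}^n$ is $\langle x,z\rangle=\operatorname{Re}(z^*x)$. The dual atomic norm is $\|z\|_{\mathcal{A}}^*=\sup_{a\in\mathcal{A}}\langle z,a\rangle$. $\operatorname{cone}(X)$ denotes the conic hull $\{\lambda x:\lambda\ge0,x\in X\}$; in the infimum defining $\phi_\gamma$, $z$ ranges over nonzero elements. *)

(* Defs.v *)
(* C^n is modelled as 'rV[R[i]]_n with
   R : realType and R[i] the complex numbers of mathcomp-real-closed. *)
From HB Require Import structures.
From mathcomp Require Import all_boot all_order all_algebra.
From mathcomp Require Import all_classical all_reals.
From mathcomp Require Import all_analysis.
From mathcomp Require Import complex.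
Set Implicit Arguments. Unset Strict Implicit. Unset Printing Implicit Defensive.
Import Order.TTheory GRing.Theory Num.Theory numFieldNormedType.Exports.
Local Open Scope classical_set_scope.
Local Open Scope ring_scope.

Section AtomicDefs.
Variables (R : realType) (n : nat).

Definition Cvec := 'rV[R[i]]_n.

Definition rC (c : R) : R[i] := Complex c 0.

(* real inner product <x,z> = Re(z^* x) *)
Definition rinner (x z : Cvec) : R :=
  \sum_(j < n) (complex.Re (x ord0 j) * complex.Re (z ord0 j) + complex.Im (x ord0 j) * complex.Im (z ord0 j)).

Definition l2norm (x : Cvec) : R := Num.sqrt (rinner x x).

Definition convhull (A : set Cvec) : set Cvec :=
  [set x | exists (k : nat) (c : 'I_k -> R) (a : 'I_k -> Cvec),
      (forall i, 0 <= c i) /\ \sum_(i < k) c i = 1 /\ (forall i, A (a i)) /\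
      x = \sum_(i < k) rC (c i) *: a i].

Definition atomic_norm (A : set Cvec) (x : Cvec) : R :=
  inf [set t : R | 0 < t /\ exists y, convhull A y /\ x = rC t *: y].

Definition dual_atomic_norm (A : set Cvec) (z : Cvec) : R :=
  sup [set rinner z a | a in A].

(* identification C^n ~ R^(2n) (real and imaginary parts), giving the
   standard topology on C^n *)
Definition realify (x : Cvec) : 'rV[R]_(n + n) :=
  row_mx (\row_j complex.Re (x ord0 j)) (\row_j complex.Im (x ord0 j)).

Definition centrosymmetric (A : set Cvec) : Prop :=
  forall a, A a -> A (- a).

Definition conic_hull (X : set Cvec) : set Cvec :=
  [set z | exists (l : R) (x : Cvec), 0 <= l /\ X x /\ z = rC l *: x].

Definition C_gamma (gamma : R) (xs : Cvec) (A : set Cvec) : set Cvec :=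
  conic_hull [set z | atomic_norm A (xs + z) <= atomic_norm A xs + gamma * atomic_norm A z].

Definition phi_gamma (gamma : R) (xs : Cvec) (A : set Cvec) : R :=
  inf [set l2norm z / atomic_norm A z | z in [set z | C_gamma gamma xs A z /\ z != 0]].

Definition is_AST_solution (A : set Cvec) (tau : R) (y xh : Cvec) : Prop :=
  forall x, 2^-1 * l2norm (xh - y) ^+ 2 + tau * atomic_norm A xh
            <= 2^-1 * l2norm (x - y) ^+ 2 + tau * atomic_norm A x.

End AtomicDefs.

(* Main.v *)
Require Import Defs.
From HB Require Import structures.
From mathcomp Require Import all_boot all_order all_algebra.
From mathcomp Require Import all_classical all_reals.
From mathcomp Require Import all_analysis.
From mathcomp Require Import complex.
From mathcomp Require Import ring lra.
From mathcomp Require Import measurable_realfun.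
Set Implicit Arguments. Unset Strict Implicit. Unset Printing Implicit Defensive.
Import Order.TTheory GRing.Theory Num.Theory numFieldNormedType.Exports.
Local Open Scope classical_set_scope.
Local Open Scope ring_scope.

Section P1.
Variables (R : realType) (n : nat).
Local Notation V := (Cvec R n).

Lemma ReD (x y : R[i]) : complex.Re (x + y) = complex.Re x + complex.Re y.
Proof. by case: x; case: y. Qed.
Lemma ImD (x y : R[i]) : complex.Im (x + y) = complex.Im x + complex.Im y.
Proof. by case: x; case: y. Qed.
Lemma ReN (x : R[i]) : complex.Re (- x) = - complex.Re x.
Proof. by case: x. Qed.
Lemma ImN (x : R[i]) : complex.Im (- x) = - complex.Im x.
Proof. by case: x. Qed.
Lemma ReB (x y : R[i]) : complex.Re (x - y) = complex.Re x - complex.Re y.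
Proof. by rewrite ReD ReN. Qed.
Lemma ImB (x y : R[i]) : complex.Im (x - y) = complex.Im x - complex.Im y.
Proof. by rewrite ImD ImN. Qed.
Lemma ReZ (c : R) (x : R[i]) : complex.Re (rC c * x) = c * complex.Re x.
Proof. case: x => a b /=. rewrite /rC /=. ring. Qed.
Lemma ImZ (c : R) (x : R[i]) : complex.Im (rC c * x) = c * complex.Im x.
Proof. case: x => a b /=. rewrite /rC /=. ring. Qed.
Lemma Re0 : complex.Re (0 : R[i]) = 0. Proof. by []. Qed.
Lemma Im0 : complex.Im (0 : R[i]) = 0. Proof. by []. Qed.
Lemma rCM (a b : R) : rC a * rC b = rC (a * b).
Proof. rewrite /rC /=. apply/eqP; rewrite eq_complex /=; apply/andP; split; apply/eqP; ring. Qed.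
Lemma rCD (a b : R) : rC a + rC b = rC (a + b).
Proof. rewrite /rC /=. apply/eqP; rewrite eq_complex /=; apply/andP; split; apply/eqP; ring. Qed.
Lemma rC1 : rC (1:R) = 1. Proof. by []. Qed.
Lemma rC0 : rC (0:R) = 0. Proof. by []. Qed.
Implicit Types (u v a : V).
Lemma rinnerDl u v a : rinner (u + v) a = rinner u a + rinner v a.
Proof. rewrite /rinner -big_split /=; apply: eq_bigr => j _; rewrite !mxE ReD ImD; ring. Qed.
Lemma rinnerNl u a : rinner (- u) a = - rinner u a.
Proof. rewrite /rinner -sumrN; apply: eq_bigr => j _; rewrite !mxE ReN ImN; ring. Qed.
Lemma rinnerBl u v a : rinner (u - v) a = rinner u a - rinner v a.
Proof. by rewrite rinnerDl rinnerNl. Qed.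
Lemma rinnerZl (c : R) u a : rinner (rC c *: u) a = c * rinner u a.
Proof. rewrite /rinner mulr_sumr; apply: eq_bigr => j _; rewrite !mxE ReZ ImZ; ring. Qed.
Lemma rinnerC u v : rinner u v = rinner v u.
Proof. rewrite /rinner; apply: eq_bigr => j _; ring. Qed.
Lemma rinner0l a : rinner 0 a = 0.
Proof. rewrite /rinner big1 // => j _; rewrite !mxE Re0 Im0; ring. Qed.
Lemma rinnerDr u v a : rinner a (u + v) = rinner a u + rinner a v.
Proof. by rewrite rinnerC rinnerDl !(rinnerC a). Qed.
Lemma rinnerNr u a : rinner a (- u) = - rinner a u.
Proof. by rewrite rinnerC rinnerNl rinnerC. Qed.
Lemma rinnerBr u v a : rinner a (u - v) = rinner a u - rinner a v.
Proof. by rewrite rinnerDr rinnerNr. Qed.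
Lemma rinnerZr (c : R) u a : rinner a (rC c *: u) = c * rinner a u.
Proof. by rewrite rinnerC rinnerZl rinnerC. Qed.
Lemma rinner_suml k (F : 'I_k -> V) a : rinner (\sum_(i < k) F i) a = \sum_(i < k) rinner (F i) a.
Proof. exact: (big_morph (fun u => rinner u a) (fun u v => rinnerDl u v a) (rinner0l a)). Qed.
Lemma rinner_ge0 u : 0 <= rinner u u.
Proof. rewrite /rinner; apply: sumr_ge0 => j _; apply: addr_ge0; exact: mulr_ge0 || by rewrite -expr2 sqr_ge0. Qed.
Definition Nn u := \sum_(j < n) (`|complex.Re (u ord0 j)| + `|complex.Im (u ord0 j)|).
Lemma Nn_ge0 u : 0 <= Nn u.
Proof. by apply: sumr_ge0 => j _; apply: addr_ge0. Qed.
Lemma l2norm_ge0 u : 0 <= l2norm u. Proof. exact: sqrtr_ge0. Qed.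
Lemma l2norm_sq u : l2norm u ^+ 2 = rinner u u.
Proof. by rewrite /l2norm sqr_sqrtr // rinner_ge0. Qed.
Lemma coord_le u j : complex.Re (u ord0 j) ^+ 2 + complex.Im (u ord0 j) ^+ 2 <= rinner u u.
Proof.
rewrite /rinner (bigD1 j) //= -!expr2 lerDl.
by apply: sumr_ge0 => i _; rewrite -!expr2; apply: addr_ge0; rewrite sqr_ge0.
Qed.
Lemma Re_le u j : `|complex.Re (u ord0 j)| <= l2norm u.
Proof.
rewrite -sqrtr_sqr /l2norm ler_sqrt ?rinner_ge0 //.
apply: le_trans (coord_le u j); rewrite lerDl; exact: sqr_ge0.
Qed.
Lemma Im_le u j : `|complex.Im (u ord0 j)| <= l2norm u.
Proof.
rewrite -sqrtr_sqr /l2norm ler_sqrt ?rinner_ge0 //.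
apply: le_trans (coord_le u j); rewrite lerDr; exact: sqr_ge0.
Qed.
Lemma rinner_le_N u v : rinner u v <= Nn u * l2norm v.
Proof.
rewrite /rinner /Nn mulr_suml; apply: ler_sum => j _; rewrite mulrDl.
apply: lerD.
  apply: le_trans (ler_norm _) _; rewrite normrM; apply: ler_wpM2l => //; exact: Re_le.
apply: le_trans (ler_norm _) _; rewrite normrM; apply: ler_wpM2l => //; exact: Im_le.
Qed.
Lemma N_le_l2 u : Nn u <= (n.*2)%:R * l2norm u.
Proof.
apply: le_trans (_ : \sum_(j < n) (l2norm u + l2norm u) <= _).
  apply: ler_sum => j _; apply: lerD; [exact: Re_le | exact: Im_le].
rewrite sumr_const card_ord -mulr_natl -mul2n natrM; rewrite le_eqVlt; apply/orP; left; apply/eqP; ring.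
Qed.
Lemma l2norm_le_N u : l2norm u <= Nn u.
Proof.
have h := rinner_le_N u u; rewrite -l2norm_sq expr2 in h.
have [z|pos] := eqVneq (l2norm u) 0; first by rewrite z Nn_ge0.
have p : 0 < l2norm u by rewrite lt_def pos l2norm_ge0.
by rewrite -(ler_pM2r p).
Qed.
Lemma l2norm0_N u : l2norm u = 0 -> Nn u = 0.
Proof.
move=> a0; apply/le_anti; rewrite Nn_ge0 andbT; apply: le_trans (N_le_l2 u) _.
by rewrite a0 mulr0.
Qed.
Lemma cs u v : rinner u v <= l2norm u * l2norm v.
Proof.
have [a0|ap] := eqVneq (l2norm u) 0.
  rewrite a0 mul0r; apply: le_trans (rinner_le_N u v) _; by rewrite l2norm0_N // mul0r.
have [b0|bp] := eqVneq (l2norm v) 0.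
  rewrite b0 mulr0 rinnerC; apply: le_trans (rinner_le_N v u) _; by rewrite l2norm0_N // mul0r.
have ha : 0 < l2norm u by rewrite lt_def ap l2norm_ge0.
have hb : 0 < l2norm v by rewrite lt_def bp l2norm_ge0.
have h := rinner_ge0 (rC (l2norm v) *: u - rC (l2norm u) *: v).
rewrite !(rinnerBl, rinnerBr, rinnerZl, rinnerZr) -!l2norm_sq (rinnerC v u) in h.
move: h; set a := l2norm u; set b := l2norm v; set c := rinner u v => h.
have hab : 0 < a * b by apply: mulr_gt0.
rewrite -(ler_pM2l hab); nra.
Qed.
Lemma l2norm_tri u v : l2norm (u + v) <= l2norm u + l2norm v.
Proof.
rewrite -(ler_pXn2r (n:=2)) // ?nnegrE ?addr_ge0 ?l2norm_ge0 //.
rewrite l2norm_sq !(rinnerDl, rinnerDr) (rinnerC v u) sqrrD -!l2norm_sq.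
have := cs u v; lra.
Qed.
Lemma l2normZ (c : R) u : l2norm (rC c *: u) = `|c| * l2norm u.
Proof.
rewrite /l2norm rinnerZl rinnerZr mulrA -expr2 sqrtrM ?sqr_ge0 //.
by rewrite sqrtr_sqr.
Qed.
Lemma l2normN u : l2norm (- u) = l2norm u.
Proof. by rewrite /l2norm rinnerNl rinnerNr opprK. Qed.
End P1.

Section P2.
Variables (R : realType) (n : nat).
Local Notation V := (Cvec R n).
Variables (A : set V) (csA : centrosymmetric A) (r : R) (r0 : 0 < r)
  (ballA : forall x : V, l2norm x <= r -> convhull A x).

Lemma conv_neg y : convhull A y -> convhull A (- y).
Proof.
move=> [k [c [a [c0 [s1 [Aa ->]]]]]].
exists k, c, (fun i => - a i); split=> //; split=> //; split; first by move=> i; apply: csA.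
by rewrite -sumrN; apply: eq_bigr => i _; rewrite scalerN.
Qed.

Lemma conv_comb (l : R) y1 y2 : 0 <= l <= 1 -> convhull A y1 -> convhull A y2 ->
  convhull A (rC l *: y1 + rC (1 - l) *: y2).
Proof.
move=> /andP[l0 l1] [k1 [c1 [a1 [c10 [s1 [Aa1 ->]]]]]] [k2 [c2 [a2 [c20 [s2 [Aa2 ->]]]]]].
have sl : forall i : 'I_k1, fintype.split (lshift k2 i) = inl i := fun i => unsplitK (inl i).
have sr : forall i : 'I_k2, fintype.split (rshift k1 i) = inr i := fun i => unsplitK (inr i).
exists (k1 + k2)%N,
  (fun i => match fintype.split i with inl i1 => l * c1 i1 | inr i2 => (1 - l) * c2 i2 end),
  (fun i => match fintype.split i with inl i1 => a1 i1 | inr i2 => a2 i2 end).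
split; first by move=> i; case: (fintype.split i) => j; apply: mulr_ge0 => //; rewrite subr_ge0.
split.
  rewrite big_split_ord /=.
  under eq_bigr do rewrite sl. under [X in _ + X]eq_bigr do rewrite sr.
  by rewrite -!mulr_sumr s1 s2; ring.
split; first by move=> i; case: (fintype.split i) => j; [apply: Aa1 | apply: Aa2].
rewrite big_split_ord /=.
under [X in _ = X + _]eq_bigr do rewrite sl. under [X in _ = _ + X]eq_bigr do rewrite sr.
rewrite !scaler_sumr; congr (_ + _); apply: eq_bigr => i _; by rewrite scalerA rCM.
Qed.

Lemma conv_ub (u : V) D y : (forall a, A a -> rinner u a <= D) -> convhull A y -> rinner u y <= D.
Proof.
move=> h [k [c [a [c0 [s1 [Aa ->]]]]]].
rewrite rinnerC rinner_suml.
apply: le_trans (_ : \sum_(i < k) c i * D <= _).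
  apply: ler_sum => i _; rewrite rinnerZl rinnerC; apply: ler_wpM2l => //; exact: h.
by rewrite -mulr_suml s1 mul1r.
Qed.
Definition ANS (x : V) := [set t : R | 0 < t /\ exists y, convhull A y /\ x = rC t *: y].
Lemma an_def x : atomic_norm A x = inf (ANS x). Proof. by []. Qed.

Lemma an_ne x : ANS x !=set0.
Proof.
have [z|nz] := eqVneq (l2norm x) 0.
  exists 1; split=> //; exists x; split; first by apply: ballA; rewrite z ltW.
  by rewrite rC1 scale1r.
have xp : 0 < l2norm x by rewrite lt_def nz l2norm_ge0.
exists (l2norm x / r); split; first by rewrite divr_gt0.
exists (rC (r / l2norm x) *: x); split.
  apply: ballA; rewrite l2normZ ger0_norm; last by rewrite divr_ge0 // ltW.
  by rewrite divfK.
rewrite scalerA rCM (_ : _ * _ = 1) ?rC1 ?scale1r //.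
by rewrite mulrA divfK ?divff // gt_eqF.
Qed.
Lemma an_lbound x : lbound (ANS x) 0.
Proof. by move=> t [/ltW]. Qed.
Lemma an_ge0 x : 0 <= atomic_norm A x.
Proof. rewrite an_def; apply: (lb_le_inf (an_ne x)); exact: an_lbound. Qed.
Lemma an_le x t : ANS x t -> atomic_norm A x <= t.
Proof. by move=> h; rewrite an_def; apply: ge_inf => //; exists 0; exact: an_lbound. Qed.
Lemma an_glb x v : (forall t, ANS x t -> v <= t) -> v <= atomic_norm A x.
Proof. by move=> h; rewrite an_def; apply: lb_le_inf (an_ne x) _ => t /h. Qed.

Lemma an_tri x1 x2 : atomic_norm A (x1 + x2) <= atomic_norm A x1 + atomic_norm A x2.
Proof.
suff key : forall s t, ANS x1 s -> ANS x2 t -> atomic_norm A (x1 + x2) <= s + t.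
  have h1 : forall t, ANS x2 t -> atomic_norm A (x1 + x2) - t <= atomic_norm A x1.
    move=> t ht; apply: an_glb => s hs; have := key s t hs ht; lra.
  have h2 : atomic_norm A (x1 + x2) - atomic_norm A x1 <= atomic_norm A x2.
    apply: an_glb => t ht; have := h1 t ht; lra.
  lra.
move=> s t [s0 [y1 [c1 ->]]] [t0 [y2 [c2 ->]]].
apply: an_le; split; first by rewrite addr_gt0.
have st : s + t != 0 by rewrite gt_eqF // addr_gt0.
exists (rC (s / (s + t)) *: y1 + rC (1 - s / (s + t)) *: y2); split.
  apply: conv_comb => //; apply/andP; split; first by rewrite divr_ge0 ?addr_ge0 ?ltW.
  by rewrite ler_pdivrMr ?addr_gt0 // mul1r lerDl ltW.
rewrite scalerDr !scalerA !rCM; congr (_ *: _ + _ *: _); congr rC; field; exact: st.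
Qed.

Lemma an_scale (c : R) x : 0 < c -> atomic_norm A (rC c *: x) <= c * atomic_norm A x.
Proof.
move=> c0; rewrite -ler_pdivrMl //; apply: an_glb => t [t0 [y [cy ->]]].
rewrite ler_pdivrMl //; apply: an_le; split; first by rewrite mulr_gt0.
by exists y; split=> //; rewrite scalerA rCM.
Qed.

Lemma an_opp x : atomic_norm A (- x) <= atomic_norm A x.
Proof.
apply: an_glb => t [t0 [y [cy ->]]]; apply: an_le; split=> //.
by exists (- y); split; [exact: conv_neg | rewrite scalerN].
Qed.

Lemma an_rinner (u : V) D : 0 < D -> (forall a, A a -> rinner u a <= D) ->
  forall x, rinner u x <= D * atomic_norm A x.
Proof.
move=> D0 h x; rewrite -ler_pdivrMl //; apply: an_glb => t [t0 [y [cy ->]]].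
rewrite ler_pdivrMl // rinnerZr (mulrC D); apply: ler_wpM2l; first exact: ltW.
exact: (conv_ub h cy).
Qed.

Lemma an_convex (e : R) p x : 0 < e < 1 ->
  atomic_norm A (rC (1 - e) *: p + rC e *: x) <= (1 - e) * atomic_norm A p + e * atomic_norm A x.
Proof.
move=> /andP[e0 e1]; apply: le_trans (an_tri _ _) _.
apply: lerD; apply: an_scale => //; lra.
Qed.

Lemma small_le0 (K q : R) : 0 <= q -> (forall e, 0 < e < 1 -> K <= e * q) -> K <= 0.
Proof.
move=> q0 h; rewrite leNgt; apply/negP => K0.
have d0 : 0 < K + q + 1 by lra.
have e0 : 0 < K / (K + q + 1) by rewrite divr_gt0.
have e1 : K / (K + q + 1) < 1 by rewrite ltr_pdivrMr // mul1r; lra.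
have := h _ (introT andP (conj e0 e1)).
rewrite mulrAC ler_pdivlMr //; nra.
Qed.

Lemma rC1B (e : R) : rC (1 - e) = 1 - rC e.
Proof. rewrite /rC /=. apply/eqP; rewrite eq_complex /=; apply/andP; split; apply/eqP; ring. Qed.

Lemma vi tau (y p x : V) : 0 < tau -> is_AST_solution A tau y p ->
  rinner (y - p) (x - p) <= tau * (atomic_norm A x - atomic_norm A p).
Proof.
move=> tau0 sol; rewrite -subr_le0.
apply: (@small_le0 _ (2^-1 * rinner (x - p) (x - p))).
  by rewrite mulr_ge0 ?invr_ge0 ?rinner_ge0.
move=> e /andP[e0 e1].
have ex : rC (1 - e) *: p + rC e *: x - y = (p - y) + rC e *: (x - p).
  rewrite rC1B scalerBl scale1r scalerBr.
  rewrite -!addrA; congr (_ + _).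
  rewrite addrCA [RHS]addrCA; congr (_ + _); exact: addrC.
have hs := sol (rC (1 - e) *: p + rC e *: x).
rewrite ex !l2norm_sq in hs.
have hc := an_convex p x (e := e); rewrite e0 e1 /= in hc; have {hc} hc := hc isT.
have -> : rinner (y - p) (x - p) = - rinner (p - y) (x - p).
  by rewrite -rinnerNl opprB.
move: hs hc; set a := p - y; set d := x - p => hs hc.
rewrite (rinnerDl a (rC e *: d)) (rinnerDr a (rC e *: d) a) (rinnerDr a (rC e *: d) (rC e *: d)) !rinnerZl !rinnerZr (rinnerC d a) in hs.
move: hs hc; set ad := rinner a d; set q := rinner d d; set aa := rinner a a.
set np := atomic_norm A p; set nx := atomic_norm A x.
set nxe := atomic_norm A _ => hs hc.
have h1 : 0 <= e * (ad + e * (2^-1 * q) + tau * (nx - np)).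
  have : tau * nxe <= tau * ((1 - e) * np + e * nx) by rewrite ler_pM2l.
  move: hs; nra.
rewrite pmulr_rge0 // in h1; lra.
Qed.

Lemma phi_le gamma xs z : C_gamma gamma xs A z -> z != 0 ->
  phi_gamma gamma xs A <= l2norm z / atomic_norm A z.
Proof.
move=> cz nz; rewrite /phi_gamma; apply: ge_inf; last by exists z.
exists 0 => v [z' _ <-]; apply: divr_ge0; [exact: l2norm_ge0 | exact: an_ge0].
Qed.

Lemma det_bound tau gamma (xs w p : V) : 0 < tau -> 0 < gamma <= 1 ->
  is_AST_solution A tau (xs + w) p -> (forall a, A a -> rinner w a <= gamma * tau) ->
  0 < phi_gamma gamma xs A ->
  l2norm (p - xs) ^+ 2 <= (1 + gamma) ^+ 2 * tau ^+ 2 / (gamma ^+ 2 * phi_gamma gamma xs A ^+ 2).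
Proof.
move=> tau0 /andP[g0 g1] sol hw ph0.
have gt0 : 0 < gamma * tau by rewrite mulr_gt0.
set z := p - xs.
have pz : p = xs + z by rewrite /z addrC subrK.
have hv := vi xs tau0 sol.
have e1 : xs + w - p = w - z by rewrite pz opprD addrACA subrr add0r.
have e2 : xs - p = - z by rewrite /z opprB.
rewrite e1 e2 rinnerBl rinnerNr rinnerNr opprK in hv.
have hwz := an_rinner gt0 hw z.
have q0 := rinner_ge0 z.
have nz0 := an_ge0 z.
have cone : C_gamma gamma xs A z.
  exists 1, z; split=> //; split; last by rewrite rC1 scale1r.
  rewrite /= -pz; have : tau * (atomic_norm A p) <= tau * (atomic_norm A xs + gamma * atomic_norm A z).
    lra.
  by rewrite ler_pM2l.
have tri : atomic_norm A xs <= atomic_norm A p + atomic_norm A z.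
  have := an_tri p (- z); rewrite pz addrK -pz => h.
  apply: le_trans h _; rewrite lerD2l; exact: an_opp.
have hq : rinner z z <= (1 + gamma) * tau * atomic_norm A z.
  have : tau * (atomic_norm A xs - atomic_norm A p) <= tau * atomic_norm A z by rewrite ler_pM2l; lra.
  lra.
have B0 : 0 <= (1 + gamma) ^+ 2 * tau ^+ 2 / (gamma ^+ 2 * phi_gamma gamma xs A ^+ 2).
  by apply: divr_ge0; [apply: mulr_ge0; apply: sqr_ge0 | apply: mulr_ge0; apply: sqr_ge0].
have [z0|nz] := eqVneq z 0.
  by rewrite z0 l2norm_sq rinner0l.
have hphi := phi_le cone nz.
have [an0|anp] := eqVneq (atomic_norm A z) 0.
  by move: hphi; rewrite an0 invr0 mulr0 leNgt ph0.
have anpos : 0 < atomic_norm A z by rewrite lt_def anp nz0.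
rewrite ler_pdivlMr // in hphi.
set ph := phi_gamma gamma xs A in hphi ph0 *.
set l := l2norm z in hphi *.
have l0 : 0 <= l by exact: l2norm_ge0.
have hl : l ^+ 2 <= (1 + gamma) * tau * atomic_norm A z by rewrite /l l2norm_sq.
have hl2 : l * ph <= (1 + gamma) * tau.
  have [lz|lp] := eqVneq l 0; first by rewrite lz mul0r; apply: mulr_ge0 => //; lra.
  have lpos : 0 < l by rewrite lt_def lp l0.
  rewrite -(ler_pM2l lpos).
  have c0 : 0 <= (1 + gamma) * tau by apply: mulr_ge0; lra.
  have := ler_wpM2r (ltW ph0) hl.
  have := ler_wpM2l c0 hphi.
  rewrite expr2; nra.
rewrite ler_pdivlMr; last by apply: mulr_gt0; apply: exprn_gt0.
have hg2 : gamma ^+ 2 <= 1 by rewrite expr2; nra.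
have : (l * ph) ^+ 2 <= ((1 + gamma) * tau) ^+ 2.
  have lph : 0 <= l * ph by apply: mulr_ge0 => //; apply: ltW.
  rewrite !expr2; nra.
rewrite !exprMn => h.
have p2 : 0 <= l ^+ 2 * ph ^+ 2 by apply: mulr_ge0; apply: sqr_ge0.
have := ler_wpM2l p2 hg2.
rewrite mulr1 => h2.
apply: le_trans h; apply: le_trans h2; rewrite le_eqVlt; apply/orP; left; apply/eqP; ring.
Qed.

Lemma prox_lip tau (y1 y2 p1 p2 : V) : 0 < tau ->
  is_AST_solution A tau y1 p1 -> is_AST_solution A tau y2 p2 ->
  l2norm (p1 - p2) <= l2norm (y1 - y2).
Proof.
move=> t0 s1 s2.
have h1 := vi p2 t0 s1; have h2 := vi p1 t0 s2.
have key : rinner (p1 - p2) (p1 - p2) <= rinner (y1 - y2) (p1 - p2).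
  move: h1 h2; rewrite !(rinnerBl, rinnerBr).
  have := rinnerC p1 p2; have := rinnerC p1 y1; have := rinnerC p2 y1;
  have := rinnerC p1 y2; have := rinnerC p2 y2; have := rinnerC y1 y2.
  lra.
have := cs (y1 - y2) (p1 - p2); rewrite -l2norm_sq in key.
move=> c; have := le_trans key c.
have l0 := l2norm_ge0 (p1 - p2); have l1 := l2norm_ge0 (y1 - y2).
have [z|nz] := eqVneq (l2norm (p1 - p2)) 0; first by rewrite z.
have lp : 0 < l2norm (p1 - p2) by rewrite lt_def nz l0.
by rewrite expr2 mulrC ler_pM2r.
Qed.
End P2.

Section P4.
Variables (R : realType) (n : nat).
Local Notation V := (Cvec R n).
Variables (A : set V) (csA : centrosymmetric A) (a0 : V) (Aa0 : A a0) (M : R)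
  (Mb : forall a, A a -> forall j, `|complex.Re (a ord0 j)| <= M /\ `|complex.Im (a ord0 j)| <= M).

Lemma rinner_boundA (u a : V) : A a -> rinner u a <= M * Nn u.
Proof.
move=> Aa; rewrite /rinner /Nn mulr_sumr; apply: ler_sum => j _.
have [h1 h2] := Mb Aa j; rewrite mulrDr.
apply: lerD; apply: le_trans (ler_norm _) _; rewrite normrM mulrC; apply: ler_wpM2r => //.
Qed.

Lemma dual_ub (u a : V) : A a -> rinner u a <= dual_atomic_norm A u.
Proof.
move=> Aa; rewrite /dual_atomic_norm; apply: sup_upper_bound; last by exists a.
split; first by exists (rinner u a0), a0.
by exists (M * Nn u) => v [b Ab <-]; apply: rinner_boundA.
Qed.

Lemma dual_le (u : V) D : (forall a, A a -> rinner u a <= D) -> dual_atomic_norm A u <= D.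
Proof.
move=> h; rewrite /dual_atomic_norm; apply: ge_sup; first by exists (rinner u a0), a0.
by move=> v [b Ab <-]; apply: h.
Qed.

Lemma dual_lip (u v : V) : dual_atomic_norm A u <= dual_atomic_norm A v + M * Nn (u - v).
Proof.
apply: dual_le => a Aa.
have -> : rinner u a = rinner v a + rinner (u - v) a by rewrite rinnerBl; ring.
apply: lerD; [exact: dual_ub | exact: rinner_boundA].
Qed.

Lemma dual_ge0 (u : V) : 0 <= dual_atomic_norm A u.
Proof.
have h1 := dual_ub u Aa0; have h2 := dual_ub u (csA Aa0).
rewrite rinnerC rinnerNl rinnerC in h2; lra.
Qed.
End P4.

Section P5.
Variables (R : realType) (n : nat).
Local Notation V := (Cvec R n).

Lemma A_nonempty (A : set V) r : 0 < r -> (forall x : V, l2norm x <= r -> convhull A x) ->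
  exists a0, A a0.
Proof.
move=> r0 ball.
have : convhull A 0 by apply: ball; rewrite /l2norm rinner0l sqrtr0 ltW.
case=> [[|k]] [c [a [_ [s1 [Aa _]]]]].
  by move: s1; rewrite big_ord0 => /eqP; rewrite eq_sym oner_eq0.
by exists (a ord0).
Qed.

Lemma A_bounded (A : set V) : compact (@realify R n @` convhull A) ->
  exists M : R, forall a, A a -> forall j,
    `|complex.Re (a ord0 j)| <= M /\ `|complex.Im (a ord0 j)| <= M.
Proof.
move=> /compact_bounded [M0 [_ HM]].
have := HM (M0 + 1); rewrite ltrDl ltr01 => /(_ isT) H.
exists (M0 + 1) => a Aa j.
have ca : convhull A a.
  exists 1%N, (fun _ => 1), (fun _ => a); split=> //; split; first by rewrite big_ord1.
  by split=> //; rewrite big_ord1 rC1 scale1r.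
have := H (realify a) (ex_intro2 _ _ a ca erefl) => /= hn.
have ent : forall k, `|realify a ord0 k| <= M0 + 1.
  move=> k; apply: le_trans hn.
  have -> : `|realify a| = mx_norm (realify a) by [].
  rewrite mx_normrE.
  exact: (le_bigmax _ _ (ord0, k)).
have := ent (lshift n j); have := ent (rshift n j).
by rewrite /realify !mxE (unsplitK (inl _)) (unsplitK (inr _)) !mxE.
Qed.
End P5.

Section P6.
Variables (R : realType) (n : nat).
Local Notation V := (Cvec R n).
Variables (d : measure_display) (T : measurableType d) (w : T -> V)
  (mw : forall j : 'I_n, measurable_fun setT (fun t => complex.Re (w t ord0 j)) /\
                    measurable_fun setT (fun t => complex.Im (w t ord0 j))).

Lemma meas_lt (g : T -> R) (b : R) : measurable_fun setT g -> measurable [set s | g s < b].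
Proof.
move=> mg; have := mg measurableT _ (measurable_itv `]-oo, b[); rewrite setTI.
congr measurable; apply/seteqP; split => s /=; by rewrite in_itv.
Qed.

Lemma meas_Nw (c : R) (L : R) (v : V) : measurable_fun setT (fun s => c + L * Nn (w s - v)).
Proof.
apply: measurable_funD; first exact: measurable_cst.
apply: measurable_funM; first exact: measurable_cst.
rewrite /Nn.
have -> : (fun s => \sum_(j < n) (`|complex.Re ((w s - v) ord0 j)| + `|complex.Im ((w s - v) ord0 j)|))
  = (fun s => \sum_(j <- index_enum 'I_n) (`|complex.Re (w s ord0 j) - complex.Re (v ord0 j)| + `|complex.Im (w s ord0 j) - complex.Im (v ord0 j)|)).
  by apply: funext => s; apply: eq_bigr => j _; rewrite !mxE ReB ImB.
apply: measurable_sum => j; have [m1 m2] := mw j.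
apply: measurable_funD; apply: measurableT_comp; (try exact: normr_measurable);
  by apply: measurable_funB => //; exact: measurable_cst.
Qed.

Lemma NnN (v : V) : Nn (- v) = Nn v.
Proof. by apply: eq_bigr => j _; rewrite !mxE ReN ImN !normrN. Qed.

Definition Iidx := ({ffun 'I_n -> int * int} * nat)%type.
Definition ctr (i : Iidx) : V :=
  \row_j Complex (((i.1 j).1)%:~R / (i.2.+1)%:R) (((i.1 j).2)%:~R / (i.2.+1)%:R).
Definition close (k : nat) (c v : V) := forall j,
  `|complex.Re (v ord0 j) - complex.Re (c ord0 j)| <= (k.+1%:R)^-1 /\
  `|complex.Im (v ord0 j) - complex.Im (c ord0 j)| <= (k.+1%:R)^-1.
Definition sel (i : Iidx) : option T :=
  match pselect (exists s, close i.2 (ctr i) (w s)) with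
  | left h => Some (sval (cid h)) | right _ => None end.

Lemma selP i s' : sel i = Some s' -> close i.2 (ctr i) (w s').
Proof.
rewrite /sel; case: pselect => // h [<-]; exact: (svalP (cid h)).
Qed.
Lemma sel_ex i s : close i.2 (ctr i) (w s) -> exists s', sel i = Some s'.
Proof.
move=> c; rewrite /sel; case: pselect => [h|h]; first by eexists.
by exfalso; apply: h; exists s.
Qed.

Lemma close_Nn k c v1 v2 : close k c v1 -> close k c v2 -> Nn (v1 - v2) <= (4 * n)%:R / (k.+1)%:R.
Proof.
move=> h1 h2; rewrite /Nn.
apply: le_trans (_ : \sum_(j < n) (4 / (k.+1)%:R) <= _); last first.
  rewrite sumr_const card_ord -mulr_natl natrM le_eqVlt; apply/orP; left; apply/eqP; ring.
apply: ler_sum => j _; rewrite !mxE ReB ImB.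
have [a1 b1] := h1 j; have [a2 b2] := h2 j.
have e1 : `|complex.Re (v1 ord0 j) - complex.Re (v2 ord0 j)| <= 2 / (k.+1)%:R.
  apply: le_trans (_ : `|complex.Re (v1 ord0 j) - complex.Re (c ord0 j)| + `|complex.Re (v2 ord0 j) - complex.Re (c ord0 j)| <= _).
    apply: le_trans (ler_normB _ _); rewrite le_eqVlt; apply/orP; left; apply/eqP; congr `|_|; ring.
  rewrite mulrC mulr_natr mulr2n; exact: lerD.
have e2 : `|complex.Im (v1 ord0 j) - complex.Im (v2 ord0 j)| <= 2 / (k.+1)%:R.
  apply: le_trans (_ : `|complex.Im (v1 ord0 j) - complex.Im (c ord0 j)| + `|complex.Im (v2 ord0 j) - complex.Im (c ord0 j)| <= _).
    apply: le_trans (ler_normB _ _); rewrite le_eqVlt; apply/orP; left; apply/eqP; congr `|_|; ring.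
  rewrite mulrC mulr_natr mulr2n; exact: lerD.
have -> : 4 / (k.+1)%:R = 2 / (k.+1)%:R + 2 / (k.+1)%:R :> R by rewrite -mulrDl; congr (_ * _); rewrite -natrD.
exact: lerD.
Qed.

Lemma floor_close (K x : R) : 0 < K -> `|x - (Num.floor (K * x))%:~R / K| <= K^-1.
Proof.
move=> K0.
have h1 := floor_le (K * x); have h2 := floorD1_gt (K * x).
rewrite intrD in h2.
set F := (Num.floor (K * x))%:~R in h1 h2 *.
have -> : x - F / K = (K * x - F) / K by field; rewrite gt_eqF.
rewrite ger0_norm; last by rewrite divr_ge0 ?subr_ge0 // ltW.
rewrite ler_pdivrMr // mulVf ?gt_eqF //; lra.
Qed.

Lemma close_ex s k : exists i : Iidx, i.2 = k /\ close k (ctr i) (w s).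
Proof.
pose K : R := (k.+1)%:R.
exists ([ffun j => (Num.floor (K * complex.Re (w s ord0 j)), Num.floor (K * complex.Im (w s ord0 j)))], k).
split=> // j; rewrite /ctr !mxE /= ffunE /=.
split; apply: floor_close; by rewrite ltr0n.
Qed.

Definition Gset (f : T -> R) (L b : R) (k : nat) : set T :=
  match pickle_inv k with
  | Some i => match sel i with
              | Some s' => [set s | f s' + L * Nn (w s - w s') < b]
              | None => set0 end
  | None => set0 end.

Lemma Gset_meas f L b k : measurable (Gset f L b k).
Proof.
rewrite /Gset; case: (pickle_inv k) => [i|]; last exact: measurable0.
case: (sel i) => [s'|]; last exact: measurable0.
exact: (meas_lt _ (meas_Nw _ _ _)).
Qed.

Lemma arch_inv (x : R) : 0 < x -> exists m : nat, (m.+1%:R)^-1 < x.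
Proof.
move=> x0; exists (Num.truncn x^-1).
have h := truncnS_gt x^-1; move: h; set M : R := _%:R => h.
have M0 : 0 < M by rewrite ltr0n.
rewrite -[M^-1]mul1r ltr_pdivrMr // -(mulfV (lt0r_neq0 x0)) ltr_pM2l //.
Qed.

Lemma Lip_meas (f : T -> R) (L : R) : 0 <= L ->
  (forall s s', f s <= f s' + L * Nn (w s - w s')) ->
  forall B, measurable [set s | f s <= B].
Proof.
move=> L0 hf B.
have -> : [set s | f s <= B] = \bigcap_m \bigcup_k Gset f L (B + (m.+1%:R)^-1) k.
  apply/seteqP; split => s /=.
    move=> fsB m _.
    pose k := Num.truncn ((8 * n)%:R * L * m.+1%:R).
    have hk := truncnS_gt ((8 * n)%:R * L * m.+1%:R); rewrite -/k in hk.
    have [i [ik ci]] := close_ex s k.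
    rewrite -ik in ci; have [s' hs'] := sel_ex ci.
    exists (pickle i) => //.
    rewrite /Gset pickleK_inv hs' /=.
    have cs' := selP hs'.
    have hN := close_Nn ci cs'; rewrite ik in hN.
    have h2 := hf s' s; rewrite -NnN opprB in h2.
    have N0 := Nn_ge0 (w s - w s').
    move: hN h2 N0; move: (Nn (w s - w s')) => N hN h2 N0.
    have kp : 0 < (k.+1)%:R :> R by rewrite ltr0n.
    have mp : 0 < (m.+1)%:R :> R by rewrite ltr0n.
    have LN0 : 0 <= L * N by apply: mulr_ge0.
    suff HH : 2 * (L * N) < (m.+1%:R)^-1.
      have t1 : f s' + L * N <= f s + 2 * (L * N) by lra.
      by apply: le_lt_trans t1 _; apply: ler_ltD.
    rewrite mulrA.
    rewrite -[X in _ < X]mul1r ltr_pdivlMr //.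
    apply: (@le_lt_trans _ _ (2 * L * ((4 * n)%:R / (k.+1)%:R) * m.+1%:R)).
      rewrite ler_pM2r //; apply: ler_wpM2l => //; apply: mulr_ge0 => //.
    have -> : 2 * L * ((4 * n)%:R / (k.+1)%:R) * m.+1%:R = ((8 * n)%:R * L * m.+1%:R) / k.+1%:R.
      rewrite !natrM; field; by rewrite gt_eqF.
    by rewrite ltr_pdivrMr // mul1r.
  move=> h; rewrite leNgt; apply/negP => Bf.
  have fB : 0 < f s - B by rewrite subr_gt0.
  have [m hm] := arch_inv fB.
  have [k _] := h m I.
  rewrite /Gset; case: (pickle_inv k) => [i|] //; case: (sel i) => [s'|] //= hk.
  have h3 := hf s s'; move: hk; rewrite /= => hk.
  have h4 := le_lt_trans h3 hk.
  move: hm; rewrite ltrBrDl => hm; have := lt_trans h4 hm; by rewrite ltxx.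
apply: bigcapT_measurable => m; apply: bigcupT_measurable => k; exact: Gset_meas.
Qed.
End P6.

Unset Implicit Arguments.

Theorem proposition2 (R : realType) (n : nat) (A : set (Cvec R n))
  (d : measure_display) (T : measurableType d) (P : probability T R)
  (xs : Cvec R n) (w : T -> Cvec R n) (delta : R -> R) (tau gamma : R) :
  centrosymmetric A ->
  compact (@realify R n @` convhull A) ->
  (exists r : R, 0 < r /\ forall x, l2norm x <= r -> convhull A x) ->
  (* w is a random vector: real and imaginary parts of its coordinates are measurable *)
  (forall j : 'I_n, measurable_fun setT (fun t => complex.Re (w t ord0 j)) /\
                    measurable_fun setT (fun t => complex.Im (w t ord0 j))) ->
  (\int[P]_t (dual_atomic_norm A (w t))%:E < +oo)%E ->
  let Ew := fine (\int[P]_t (dual_atomic_norm A (w t))%:E) in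
  (forall t : R, 0 < t ->
     (P [set s | (Ew + t <= dual_atomic_norm A (w s))%R] < (delta t)%:E)%E) ->
  0 < tau ->
  0 <= gamma <= 1 ->
  Ew / tau < gamma ->
  0 < phi_gamma gamma xs A ->
  forall xh : T -> Cvec R n,
    (forall s, is_AST_solution A tau (xs + w s) (xh s)) ->
    ((1 - delta (gamma * tau - Ew))%:E <=
       P [set s | (l2norm (xh s - xs) ^+ 2 <=
                  (1 + gamma) ^+ 2 * tau ^+ 2 / (gamma ^+ 2 * phi_gamma gamma xs A ^+ 2))%R])%E.
Proof.
move=> csA cpt [r [r0 ballA]] mw intf Ew hdelta tau0 /andP[g0 g1] hEw ph0 xh sol.
have [a0 Aa0] := A_nonempty r0 ballA.
have [M0 Mb0] := A_bounded cpt.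
pose M := `|M0|.
have Mb : forall a, A a -> forall j, `|complex.Re (a ord0 j)| <= M /\ `|complex.Im (a ord0 j)| <= M.
  move=> a Aa j; have [h1 h2] := Mb0 a Aa j; split; apply: le_trans (ler_norm _); assumption.
have M0p : 0 <= M by rewrite /M normr_ge0.
have Ew0 : 0 <= Ew.
  rewrite /Ew; apply: fine_ge0; apply: integral_ge0 => t _; rewrite lee_fin.
  by have := dual_ge0 csA Aa0 Mb (w t).
have gpos : 0 < gamma by apply: le_lt_trans hEw; apply: divr_ge0 => //; apply: ltW.
have tpos : 0 < gamma * tau - Ew by rewrite subr_gt0 -ltr_pdivrMr.
have hS := hdelta _ tpos.
have eS : Ew + (gamma * tau - Ew) = gamma * tau by rewrite addrC subrK.
rewrite eS in hS.
set S := [set s | gamma * tau <= dual_atomic_norm A (w s)] in hS.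
set bnd := (1 + gamma) ^+ 2 * tau ^+ 2 / (gamma ^+ 2 * phi_gamma gamma xs A ^+ 2).
set Tg := [set s | l2norm (xh s - xs) ^+ 2 <= bnd].
have mS : measurable S.
  have -> : S = [set s | - dual_atomic_norm A (w s) <= - (gamma * tau)].
    by apply/seteqP; split => s /=; rewrite lerN2.
  apply: (Lip_meas mw M0p) => s s'.
  have := dual_lip Aa0 Mb (w s') (w s); rewrite -NnN opprB; lra.
have bnd0 : 0 <= bnd.
  by apply: divr_ge0; [apply: mulr_ge0; apply: sqr_ge0 | apply: mulr_ge0; apply: sqr_ge0].
have mT : measurable Tg.
  have -> : Tg = [set s | l2norm (xh s - xs) <= Num.sqrt bnd].
    apply/seteqP; split => s /=.
      move=> h; have l0 := l2norm_ge0 (xh s - xs).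
      by rewrite -(ler_pXn2r (n:=2)) ?nnegrE ?sqrtr_ge0 // (sqr_sqrtr bnd0).
    move=> h; have l0 := l2norm_ge0 (xh s - xs).
    rewrite /Tg /= -(sqr_sqrtr bnd0) ler_pXn2r // ?nnegrE ?sqrtr_ge0 //.
  apply: (Lip_meas mw ler01) => s s'.
  rewrite mul1r.
  have e : xh s - xs = (xh s' - xs) + (xh s - xh s') by rewrite [RHS]addrC addrA subrK.
  rewrite e; apply: le_trans (l2norm_tri _ _) _; rewrite lerD2l.
  apply: le_trans (prox_lip r0 ballA tau0 (sol s) (sol s')) _.
  have -> : xs + w s - (xs + w s') = w s - w s'.
    by rewrite opprD addrACA subrr add0r.
  exact: l2norm_le_N.
have sub : ~` Tg `<=` S.
  move=> s nT; rewrite /S /=; rewrite leNgt; apply/negP => lt; apply: nT.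
  apply: (det_bound csA r0 ballA tau0 _ (sol s)) => //; first by rewrite gpos g1.
  move=> a Aa; apply: le_trans (dual_ub Aa0 Mb _ Aa) _; exact: ltW.
have le1 : (P (~` Tg) <= P S)%E.
  by apply: le_measure => //; rewrite inE //; exact: measurableC.
have eT : P Tg = (1 - P (~` Tg))%E.
  by rewrite -probability_setC ?setCK //; exact: measurableC.
rewrite eT.
have p0 : (0 <= P (~` Tg))%E by exact: measure_ge0.
have p1 : (P (~` Tg) <= 1)%E by apply: probability_le1; exact: measurableC.
have hx := le_lt_trans le1 hS.
move: p0 p1 hx; case: (P (~` Tg)) => [x| |] //= x0 x1 hx.
rewrite lte_fin in hx.
by rewrite -EFinB lee_fin; lra.
Qed.
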